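(* For integers $n\ge 1$ and $k\ge 1$, let $a_{n,k}$ be the number of permutations $\pi=\pi_1\cdots\pi_n\in\mathcal{S}_n$ such that (i) there is no $i$ with $\pi_i\pi_{i+1}\pi_{i+2}$ order isomorphic to $231$, (ii) there is no $i$ with $\pi_i\pi_{i+1}\pi_{i+2}$ order isomorphic to $132$, and (iii) there is no $i$ with $\pi_{i+k}=\pi_i+1$ (i.e. $\pi$ avoids the place-difference-value pattern $(12,(\mathbb{P},\{k\},\mathbb{P}),\{(1,2,\{1\})\},(\mathbb{P},\mathbb{P}))$). Then $$a_{n,k}=\begin{cases}F(n) & \text{if } k=1,\\ 2^{n-1} & \text{if } k\ge 2 \text{ and } n\le k,\\ 3\cdot 2^{n-3} & \text{if } k\ge 2\text{ and } n\ge k+1,\end{cases}$$ where $F(n)$ is the $n$-th Fibonacci number, $F(1)=F(2)=1$, $F(n)=F(n-1)+F(n-2)$.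
   Context: $\mathcal{S}_n$ is the set of permutations of $\{1,\dots,n\}$ written as words; $\mathbb{P}$ is the set of positive integers. Conditions (i) and (ii) say $\pi$ avoids the consecutive (generalized) patterns $231$ and $132$. *)

(* Defs.v *)
From mathcomp Require Import all_boot all_fingroup.
Set Implicit Arguments. Unset Strict Implicit. Unset Printing Implicit Defensive.

Fixpoint fib (n : nat) : nat :=
  match n with
  | 0 => 0
  | 1 => 1
  | (m.+1 as p).+1 => fib p + fib m
  end.

(* The word pi_1 ... pi_n of s : 'S_n, read 0-indexed: word s i = pi_{i+1},
   with values in {1,...,n} (s j is in 'I_n, shifted by one). *)
Definition word (n : nat) (s : 'S_n) (i : nat) : nat :=
  nth 0 [seq (s j : nat).+1 | j <- enum 'I_n] i.

Definition occ231 (n : nat) (s : 'S_n) (i : nat) : bool :=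
  (i + 2 < n) && (word s (i + 2) < word s i) && (word s i < word s (i + 1)).

Definition occ132 (n : nat) (s : 'S_n) (i : nat) : bool :=
  (i + 2 < n) && (word s i < word s (i + 2)) && (word s (i + 2) < word s (i + 1)).

Definition occPDV (k n : nat) (s : 'S_n) (i : nat) : bool :=
  (i + k < n) && (word s (i + k) == (word s i).+1).

Definition good (k n : nat) (s : 'S_n) : bool :=
  [forall i : 'I_n, ~~ occ231 s i && ~~ occ132 s i && ~~ occPDV k s i].

(* Main.v *)
Require Import Defs.
From mathcomp Require Import all_boot all_fingroup zify.
Set Implicit Arguments. Unset Strict Implicit.

Definition o231 (l : seq nat) i :=
  (i + 2 < size l) && (nth 0 l (i + 2) < nth 0 l i) && (nth 0 l i < nth 0 l (i + 1)).
Definition o132 (l : seq nat) i :=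
  (i + 2 < size l) && (nth 0 l i < nth 0 l (i + 2)) && (nth 0 l (i + 2) < nth 0 l (i + 1)).
Definition oPDV k (l : seq nat) i :=
  (i + k < size l) && (nth 0 l (i + k) == (nth 0 l i).+1).
Definition nopeak l := all (fun i => ~~ o231 l i && ~~ o132 l i) (iota 0 (size l)).
Definition pdv k l := all (fun i => ~~ oPDV k l i) (iota 0 (size l)).

Lemma nopeakP l : reflect (forall i, ~~ o231 l i /\ ~~ o132 l i) (nopeak l).
Proof.
apply: (iffP allP) => H i.
  case: (ltnP i (size l)) => hi.
    have hm : i \in iota 0 (size l) by rewrite mem_iota.
    by move/andP: (H i hm).
  by rewrite /o231 /o132; split; apply/negP => /andP[/andP[h _] _]; lia.
by move=> _; case: (H i) => -> ->.
Qed.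

Lemma pdvP k l : reflect (forall i, ~~ oPDV k l i) (pdv k l).
Proof.
apply: (iffP allP) => H i.
  case: (ltnP i (size l)) => hi.
    have hm : i \in iota 0 (size l) by rewrite mem_iota.
    exact: (H i hm).
  by rewrite /oPDV; apply/negP => /andP[h _]; lia.
by move=> _; apply: H.
Qed.

Lemma nopeak_cons N q : (forall y, y \in q -> y < N) -> nopeak (N :: q) = nopeak q.
Proof.
move=> hq; apply/nopeakP/nopeakP => H i.
  case: (H i.+1); rewrite /o231 /o132 /= !addSn !ltnS /=; by [].
case: i => [|i].
  rewrite /o231 /o132 /=; split; apply/negP => /andP[/andP[h1 h2] h3].
    case: q hq h1 h2 h3 {H} => [|a [|b q]] //= hq _ _ h3.
    by have := hq a (mem_head _ _); lia.
  case: q hq h1 h2 h3 {H} => [|a [|b q]] //= hq _ h2 h3.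
  have hb : b \in [:: a, b & q] by rewrite !inE eqxx orbT.
  by have := hq b hb; lia.
case: (H i); rewrite /o231 /o132 /= !addSn !ltnS /=; by [].
Qed.

Lemma nopeak_rcons N p : (forall y, y \in p -> y < N) -> nopeak (rcons p N) = nopeak p.
Proof.
move=> hp; apply/nopeakP/nopeakP => H i.
  case: (H i); rewrite /o231 /o132 size_rcons !nth_rcons.
  case: (ltnP (i+2) (size p)) => h; last first.
    by split; apply/negP => /andP[/andP[h1 _] _]; lia.
  have -> : i < size p by lia.
  have -> : i + 1 < size p by lia.
  by rewrite ltnS (ltnW h) /= => -> ->.
rewrite /o231 /o132 size_rcons !nth_rcons.
case: (ltnP (i+2) (size p)) => h.
  have -> : i < size p by lia.
  have -> : i + 1 < size p by lia.
  by rewrite ltnS (ltnW h); case: (H i); rewrite /o231 /o132 h.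
case: (ltnP (i+2) (size p).+1) => h2; last by split; apply/negP => /andP[/andP[h1 _] _]; lia.
have e : i + 2 = size p by lia.
have -> : i < size p by lia.
have -> : i + 1 < size p by lia.
rewrite e eqxx.
have a1 := hp (nth 0 p i) (mem_nth _ (_ : i < size p)).
have a2 := hp (nth 0 p (i+1)) (mem_nth _ (_ : i + 1 < size p)).
have l1 : nth 0 p i < N by apply: a1; lia.
have l2 : nth 0 p (i+1) < N by apply: a2; lia.
by split; apply/negP => /andP[/andP[_ h3] h4]; lia.
Qed.

Lemma pdv_cons k N q : 0 < k -> N.+1 \notin q -> pdv k (N :: q) = pdv k q.
Proof.
move=> hk hq; apply/pdvP/pdvP => H i.
  by have := H i.+1; rewrite /oPDV /= !addSn ltnS /=.
case: i => [|i]; last by have := H i; rewrite /oPDV /= !addSn ltnS /=.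
rewrite /oPDV /= add0n; case: k hk {H} => // k _ /=; rewrite ltnS.
apply/negP => /andP[h /eqP e]; move: hq; rewrite -e.
by rewrite mem_nth.
Qed.

Lemma pdv_rcons k N p : 0 < k ->
  pdv k (rcons p N) = pdv k p && ~~ ((k <= size p) && (N == (nth 0 p (size p - k)).+1)).
Proof.
move=> hk; apply/pdvP/andP.
  move=> H; split.
    apply/pdvP => i; have := H i; rewrite /oPDV size_rcons !nth_rcons.
    case: (ltnP (i + k) (size p)) => h //.
    have -> : i < size p by lia.
    by rewrite ltnS (ltnW h).
  apply/negP => /andP[h1 /eqP e].
  have := H (size p - k); rewrite /oPDV size_rcons !nth_rcons.
  have -> : size p - k + k = size p by lia.
  have -> : size p - k < size p by lia.
  by rewrite ltnn eqxx ltnSn e eqxx.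
case=> /pdvP H H2 i; rewrite /oPDV size_rcons !nth_rcons.
case: (ltnP (i + k) (size p)) => h.
  have -> : i < size p by lia.
  by have := H i; rewrite /oPDV h ltnS (ltnW h).
case: (ltnP (i+k) (size p).+1) => h2 //.
have e : i + k = size p by lia.
have -> : i < size p by lia.
rewrite e eqxx /=; have -> : i = size p - k by lia.
have hk2 : k <= size p by lia.
by move: H2; rewrite hk2.
Qed.


Fixpoint E (m : nat) : seq (seq nat) :=
  match m with
  | 0 => [:: [:: 1]]
  | m'.+1 => [seq m'.+2 :: l | l <- E m'] ++ [seq rcons l m'.+2 | l <- E m']
  end.

Lemma iotaR m : iota 1 m.+2 = rcons (iota 1 m.+1) m.+2.
Proof. by have := iotaD 1 m.+1 1; rewrite addn1 add1n -cats1 => ->. Qed.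

Lemma permC m q : perm_eq (m.+2 :: q) (iota 1 m.+2) = perm_eq q (iota 1 m.+1).
Proof.
have h : perm_eq (rcons (iota 1 m.+1) m.+2) (m.+2 :: iota 1 m.+1) by rewrite perm_rcons perm_refl.
by rewrite iotaR (permPr h) perm_cons.
Qed.
Lemma permRc m q : perm_eq (rcons q m.+2) (iota 1 m.+2) = perm_eq q (iota 1 m.+1).
Proof. by rewrite perm_rcons permC. Qed.

Lemma peak_mid l j : uniq l -> (forall y, y \in l -> y <= nth 0 l j) ->
  0 < j -> j.+1 < size l -> ~~ nopeak l.
Proof.
move=> u hb j0 js; apply/negP => /nopeakP /(_ j.-1) [h1 h2].
have ha : nth 0 l j.-1 != nth 0 l j by rewrite nth_uniq //; lia.
have hc : nth 0 l j.+1 != nth 0 l j by rewrite nth_uniq //; lia.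
have hac : nth 0 l j.-1 != nth 0 l j.+1 by rewrite nth_uniq //; lia.
have la := hb _ (mem_nth 0 (_ : j.-1 < size l)).
have lc := hb _ (mem_nth 0 (_ : j.+1 < size l)).
have {}la : nth 0 l j.-1 <= nth 0 l j by apply: la; lia.
have {}lc : nth 0 l j.+1 <= nth 0 l j by apply: lc.
move: h1 h2; rewrite /o231 /o132.
have -> : j.-1 + 2 = j.+1 by lia.
have -> : j.-1 + 1 = j by lia.
have -> : j.+1 < size l by [].
move: ha hc hac la lc.
set a := nth 0 l j.-1; set b := nth 0 l j; set c := nth 0 l j.+1.
move=> ha hc hac la lc /=.
case: (ltngtP a c) => h; try lia.
Qed.

Lemma charE m l : (perm_eq l (iota 1 m.+1) && nopeak l) = (l \in E m).
Proof.
elim: m l => [|m IH] l.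
  apply/andP/idP => [[hp _]|].
    by rewrite (perm_small_eq _ hp) ?inE.
  by rewrite inE => /eqP ->.
apply/andP/idP => [[hp hn]|].
  have u : uniq l by rewrite (perm_uniq hp) iota_uniq.
  have mem : forall y, (y \in l) = (0 < y < m.+3).
    by move=> y; rewrite (perm_mem hp) mem_iota; lia.
  have Nl : m.+2 \in l by rewrite mem; lia.
  set j := index m.+2 l.
  have hj : nth 0 l j = m.+2 by rewrite nth_index.
  have js : j < size l by rewrite index_mem.
  have sl : size l = m.+2 by rewrite (perm_size hp) size_iota.
  case: (posnP j) => j0.
    have h0 : nth 0 l 0 = m.+2 by move: hj; rewrite j0.
    clear -h0 hp hn u mem IH.
    case: l h0 hp hn u mem => [|x q] // /= h0 hp hn u mem; subst x.
    rewrite /= mem_cat; apply/orP; left; apply/mapP; exists q => //.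
    rewrite -IH.
    have hq : forall y, y \in q -> y < m.+2.
      move=> y yq; have : y \in m.+2 :: q by rewrite inE yq orbT.
      rewrite mem => /andP[_]; rewrite ltnS leq_eqVlt => /orP[/eqP e|//].
      by move: u; rewrite /= -e yq.
    rewrite -(nopeak_cons hq) hn andbT.
    by rewrite -permC.
  case: (ltnP j.+1 (size l)) => js2.
    have hb : forall y, y \in l -> y <= nth 0 l j by move=> y; rewrite hj mem; lia.
    by move: hn; rewrite (negbTE (peak_mid u hb j0 js2)).
  have ej : j = (size l).-1 by lia.
  have h0 : nth 0 l (size l).-1 = m.+2 by move: hj; rewrite ej.
  clear -h0 hp hn u mem IH.
  case/lastP: l h0 hp hn u mem => [|q x] // h0 hp hn u mem.
  rewrite size_rcons /= nth_rcons ltnn eqxx in h0; subst x.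
  rewrite /= mem_cat; apply/orP; right; apply/mapP; exists q => //.
  rewrite -IH.
  have hq : forall y, y \in q -> y < m.+2.
    move=> y yq; have : y \in rcons q m.+2 by rewrite mem_rcons inE yq orbT.
    rewrite mem => /andP[_]; rewrite ltnS leq_eqVlt => /orP[/eqP e|//].
    by move: u; rewrite rcons_uniq -e yq.
  rewrite -(nopeak_rcons hq) hn andbT.
  by rewrite -permRc.
rewrite /= mem_cat => /orP[] /mapP [q hq ->]; rewrite -IH in hq;
  case/andP: hq => hp hn.
  have hq : forall y, y \in q -> y < m.+2.
    by move=> y; rewrite (perm_mem hp) mem_iota; lia.
  rewrite (nopeak_cons hq) hn; split => //.
  by rewrite permC.
have hq : forall y, y \in q -> y < m.+2.
  by move=> y; rewrite (perm_mem hp) mem_iota; lia.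
rewrite (nopeak_rcons hq) hn; split => //.
by rewrite permRc.
Qed.


Lemma memE m l : l \in E m -> size l = m.+1 /\ forall y, y \in l -> 0 < y <= m.+1.
Proof.
rewrite -charE => /andP[hp _]; split; first by rewrite (perm_size hp) size_iota.
by move=> y; rewrite (perm_mem hp) mem_iota; lia.
Qed.

Lemma uniqE m : uniq (E m).
Proof.
elim: m => [|m IH] //=.
have i1 : injective (cons m.+2) by move=> a b [].
rewrite cat_uniq (map_inj_uniq i1) (map_inj_uniq (@rcons_injl _ m.+2)) IH andbT /=. apply/hasPn => l /mapP [q hq ->].
apply/mapP => [[r hr]]; case: q hq => [|x q] hq; first by have [] := memE hq.
rewrite rcons_cons => -[ex _].
have [_ hb] := memE hq; have := hb x (mem_head _ _); lia.
Qed.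

Lemma count_and (T : Type) (b : bool) (p : pred T) s :
  count (fun x => b && p x) s = if b then count p s else 0.
Proof. by case: b; elim: s => //= x s ->. Qed.

Section Count.
Variable k : nat.
Hypothesis hk : 0 < k.

Definition bad m l := (k <= m.+1) && (m.+2 == (nth 0 l (m.+1 - k)).+1).
Definition c m := count (pdv k) (E m).
Definition d m := count (fun l => pdv k l && ~~ bad m l) (E m).

Lemma c_step m : c m.+1 = c m + d m.
Proof.
rewrite /c /d /= count_cat !count_map; congr (_ + _); apply: eq_in_count => q hq /=.
  have [_ hb] := memE hq; rewrite pdv_cons //; apply/negP => /hb; lia.
have [s _] := memE hq; by rewrite pdv_rcons // /bad s.
Qed.

Lemma d_step m : d m.+1 = (if k == m.+2 then 0 else c m) + (if k == 1 then 0 else d m).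
Proof.
rewrite /c /d /= count_cat !count_map; congr (_ + _).
  transitivity (count (fun q => (k != m.+2) && pdv k q) (E m)); last first.
    by rewrite count_and; case: eqP.
  apply: eq_in_count => q hq /=.
  have [s hb] := memE hq; rewrite pdv_cons //; last by apply/negP => /hb; lia.
  rewrite andbC; congr (_ && _); rewrite /bad.
  case: (ltnP k m.+3) => hk2 /=; last by lia.
  case e: (m.+2 - k) => [|j] /=; first by apply/eqP; lia.
  have : j < size q by lia.
  move/(mem_nth 0)/hb => h.
  have {h} h : 0 < nth 0 q j <= m.+1 := h.
  have -> : (m.+3 == (nth 0 q j).+1) = false by apply/eqP; lia.
  by rewrite andbF /=; apply/esym/negP => /eqP; lia.
transitivity (count (fun q => (k != 1) && (pdv k q && ~~ bad m q)) (E m)); last first.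
  by rewrite count_and; case: eqP.
apply: eq_in_count => q hq /=.
have [s hb] := memE hq; rewrite pdv_rcons // {1}/bad s -/(bad m q).
rewrite andbC; congr (_ && _); rewrite nth_rcons s.
case: (ltnP k m.+3) => hk2 /=; last by lia.
case: (ltnP (m.+2 - k) m.+1) => h1.
  have : m.+2 - k < size q by lia.
  move/(mem_nth 0)/hb => h.
  have {h} h : 0 < nth 0 q (m.+2 - k) <= m.+1 := h.
  have -> : (m.+3 == (nth 0 q (m.+2 - k)).+1) = false by apply/eqP; lia.
  by rewrite andbF /=; apply/esym/negP => /eqP; lia.
have -> : m.+2 - k = m.+1 by lia.
have -> : k <= m.+2 by lia.
have -> : k = 1 by lia.
by rewrite !eqxx.
Qed.
End Count.


Lemma c0 k : 0 < k -> c k 0 = 1.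
Proof. by move=> hk; rewrite /c /= /pdv /= /oPDV /=; case: k hk. Qed.
Lemma d0 k : 0 < k -> d k 0 = (if k == 1 then 0 else 1).
Proof. by move=> hk; rewrite /d /bad /= /pdv /= /oPDV /=; case: k hk => [|[|k]]. Qed.

Lemma cfib m : c 1 m = fib m.+1 /\ d 1 m = fib m.
Proof.
elim: m => [|m [IHc IHd]]; first by rewrite c0 // d0.
rewrite c_step // d_step // IHc IHd /=.
by case: m {IHc IHd} => [|m] //=; rewrite addn0.
Qed.

Lemma cpow k m : 1 < k ->
  c k m = (if m < k then 2 ^ m else 3 * 2 ^ (m - 2)) /\
  d k m = (if m.+1 < k then 2 ^ m else if m.+1 == k then 2 ^ (m - 1) else 3 * 2 ^ (m - 2)).
Proof.
move=> hk; have hk0 : 0 < k by lia.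
elim: m => [|m [IHc IHd]].
  by rewrite c0 // d0 // hk0 hk; have -> : (k == 1) = false by apply/eqP; lia.
rewrite c_step // d_step // IHc IHd.
have -> : (k == 1) = false by apply/eqP; lia.
case: (ltngtP m.+2 k) => h.
- have -> : m < k by lia. by rewrite expnS; split; lia.
- case: (m.+1 =P k) => e.
    have -> : m < k by lia.
    case: m e h {IHc IHd} => [|m] e h; first lia.
    by rewrite !subSS !subn0 expnS; split; lia.
  have -> : m < k = false by apply/negbTE; rewrite -leqNgt; lia.
  case: m e h {IHc IHd} => [|[|m]] e h; try lia.
  by rewrite !subSS !subn0 expnS; split; lia.
- have -> : m < k by lia.
  by rewrite subSS subn0 expnS; split; lia.
Qed.


Definition w n (s : 'S_n) : seq nat := [seq (s j : nat).+1 | j <- enum 'I_n].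

Lemma size_w n (s : 'S_n) : size (w s) = n.
Proof. by rewrite /w size_map size_enum_ord. Qed.

Lemma goodE k n (s : 'S_n) : good k s = nopeak (w s) && pdv k (w s).
Proof.
have E1 i : occ231 s i = o231 (w s) i by rewrite /o231 size_w.
have E2 i : occ132 s i = o132 (w s) i by rewrite /o132 size_w.
have E3 i : occPDV k s i = oPDV k (w s) i by rewrite /oPDV size_w.
apply/forallP/andP => [H|[/allP H1 /allP H2] i].
  split; apply/allP => i; rewrite mem_iota size_w => /andP[_ hi];
    have := H (Ordinal hi); rewrite /= E1 E2 E3.
    by case/andP => ->.
  by case/andP.
have hi : (i : nat) \in iota 0 (size (w s)) by rewrite mem_iota size_w ltn_ord.
by rewrite E1 E2 E3 (H1 _ hi) (H2 _ hi).
Qed.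

Lemma w_inj n : injective (@w n).
Proof.
move=> s1 s2 e; apply/permP => j.
have := congr1 (fun l => nth 0 l j) e; rewrite /w !(nth_map j) ?size_enum_ord //.
rewrite -enumT nth_ord_enum => -[/val_inj] //.
by rewrite -enumT size_enum_ord. Qed.

Lemma w_perm n (s : 'S_n) : perm_eq (w s) (iota 1 n).
Proof.
have h : perm_eq (map s (enum 'I_n)) (enum 'I_n).
  apply: uniq_perm; first by rewrite (map_inj_uniq (@perm_inj _ s)) enum_uniq.
    exact: enum_uniq.
  move=> x; rewrite mem_enum; apply/mapP; exists ((s^-1)%g x); first by rewrite mem_enum.
  by rewrite permKV.
have -> : w s = map (fun x : 'I_n => (x : nat).+1) (map s (enum 'I_n)) by rewrite -map_comp.
apply: (perm_trans (perm_map (fun x : 'I_n => (x:nat).+1) h)).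
have -> : map (fun x : 'I_n => (x:nat).+1) (enum 'I_n) = map S (map val (enum 'I_n)) by rewrite -map_comp.
by rewrite val_enum_ord -(iotaDl 1 0) add1n perm_refl.
Qed.

Lemma card_good k n : 0 < k ->
  #|[set s : 'S_n.+1 | good k s]| = count (pdv k) (E n).
Proof.
move=> hk.
rewrite cardE -(size_map (@w n.+1)) -size_filter.
apply: perm_size; apply: uniq_perm.
- by rewrite (map_inj_uniq (@w_inj _)) enum_uniq.
- by rewrite filter_uniq // uniqE.
move=> l; apply/mapP/idP => [[s hs ->]|].
  rewrite mem_enum inE goodE in hs; case/andP: hs => hn hp.
  by rewrite mem_filter hp -charE w_perm hn.
rewrite mem_filter => /andP[hp]; rewrite -charE => /andP[hper hn].
have sl : size l = n.+1 by rewrite (perm_size hper) size_iota.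
have ml y : (y \in l) = (0 < y <= n.+1) by rewrite (perm_mem hper) mem_iota; lia.
have u : uniq l by rewrite (perm_uniq hper) iota_uniq.
have bnd (j : 'I_n.+1) : 0 < nth 0 l j <= n.+1.
  by rewrite -ml mem_nth // sl.
pose f (j : 'I_n.+1) : 'I_n.+1 := inord (nth 0 l j).-1.
have fv j : (f j : nat) = (nth 0 l j).-1.
  by rewrite inordK //; have := bnd j; lia.
have finj : injective f.
  move=> i j /(congr1 (@nat_of_ord _)); rewrite !fv => e.
  apply/val_inj/eqP; rewrite -(nth_uniq 0 _ _ u) ?sl ?ltn_ord //.
  have hi : 0 < nth 0 l i by case/andP: (bnd i).
  have hj : 0 < nth 0 l j by case/andP: (bnd j).
  by rewrite -(prednK hi) -(prednK hj) e.
have ws : w (perm finj) = l.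
  rewrite /w (eq_map (_ : _ =1 fun j : 'I_n.+1 => nth 0 l j)).
    rewrite (map_comp (nth 0 l) val) val_enum_ord -sl; exact: mkseq_nth.
  by move=> j; rewrite permE fv; have := bnd j; lia.
exists (perm finj); last by [].
by rewrite mem_enum inE goodE ws hn hp.
Qed.

Unset Implicit Arguments.
Theorem mainTheorem2 (n k : nat) : 1 <= n -> 1 <= k ->
  #|[set s : 'S_n | good k s]| =
    (if k == 1 then fib n
     else if n <= k then 2 ^ (n - 1)
     else 3 * 2 ^ (n - 3)).
Proof.
case: n => [|m] // _ hk.
rewrite card_good // -/(c k m).
case: (k =P 1) => [->|hk1]; first by case: (cfib m).
have hk2 : 1 < k by lia.
case: (cpow m hk2) => -> _.
by rewrite subn1 /= subSS.
Qed.
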